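(* Let $n \ge 1$, let $C \subset \mathbb{R}^n$ be compact, let $f : C \to \mathbb{R}$ be continuous, and let $\epsilon > 0$. Then there exist a positive integer $k$, parameters $W_{ij} \in \mathbb{R}^n$, $b_{ij} \in \mathbb{R}$ for $i \in \{1,2\}$, $j \in \{1,\dots,k\}$, and output-layer parameters $u_1, u_2, c \in \mathbb{R}$ such that the maxout network with two maxout hidden units \[ g(v) = u_1 h_1(v) + u_2 h_2(v) + c, \qquad h_i(v) = \max_{j \in \{1,\dots,k\}} \left( v^T W_{ij} + b_{ij} \right), \] satisfies $|f(v) - g(v)| < \epsilon$ for all $v \in C$. That is, any continuous function on a compact domain can be approximated arbitrarily well by a maxout network with two maxout hidden units, provided each maxout unit may have arbitrarily many affine components $k$.
   Context: A maxout hidden unit with $k$ affine components, acting on an input $v \in \mathbb{R}^n$, computes $h(v) = \max_{j \in \{1,\dots,k\}} (v^T W_j + b_j)$ with learned parameters $W_j \in \mathbb{R}^n$, $b_j \in \mathbb{R}$; thus it is a convex piecewise linear function of $v$. A maxout network with two maxout hidden units consists of two such units $h_1, h_2$ (each with the same number $k$ of affine components) applied to the input $v$, followed by a linear (affine) output layer producing the real-valued output $g(v) = u_1 h_1(v) + u_2 h_2(v) + c$. *)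

(* Defs.v *)
From HB Require Import structures.
From mathcomp Require Import all_boot all_order all_algebra.
From mathcomp Require Import all_classical all_reals all_analysis.
Set Implicit Arguments. Unset Strict Implicit. Unset Printing Implicit Defensive.
Import Order.TTheory GRing.Theory Num.Theory.
Local Open Scope ring_scope.

Definition affine (R : realType) (n : nat) (w : 'rV[R]_n) (b : R) (v : 'rV[R]_n) : R :=
  (v *m w^T) 0 0 + b.

(* Maxout unit with k.+1 affine components (k.+1 >= 1 components):
   h(v) = max_{j} (v^T W_j + b_j). *)
Definition maxout_unit (R : realType) (n k : nat)
  (W : 'I_k.+1 -> 'rV[R]_n) (b : 'I_k.+1 -> R) (v : 'rV[R]_n) : R :=
  \big[Num.max/affine (W ord0) (b ord0) v]_(j < k.+1) affine (W j) (b j) v.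

Definition maxout2 (R : realType) (n k : nat)
  (W : 'I_2 -> 'I_k.+1 -> 'rV[R]_n) (b : 'I_2 -> 'I_k.+1 -> R)
  (u1 u2 c : R) (v : 'rV[R]_n) : R :=
  u1 * maxout_unit (W 0) (b 0) v + u2 * maxout_unit (W 1) (b 1) v + c.

(* Main.v *)
Require Import Defs.
From HB Require Import structures.
From mathcomp Require Import all_boot all_order all_algebra.
From mathcomp Require Import all_classical all_reals all_analysis.
From mathcomp Require Import finmap ring lra.
Import Order.TTheory GRing.Theory Num.Theory numFieldNormedType.Exports.
Local Open Scope ring_scope.
Local Open Scope classical_set_scope.

Set Implicit Arguments.
Section Aux.
Variables (R : realType) (n : nat).
Local Notation V := 'rV[R]_n.
Local Notation P := (V * R)%type.

Definition aff (p : P) (v : V) : R := affine p.1 p.2 v.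

Lemma aff_add (p q : P) v : aff (p.1 + q.1, p.2 + q.2) v = aff p v + aff q v.
Proof. rewrite /aff /affine /= linearD /= mulmxDr mxE; lra. Qed.

Lemma aff_scale a (p : P) v : aff (a *: p.1, a * p.2) v = a * aff p v.
Proof. by rewrite /aff /affine /= linearZ /= -scalemxAr mxE mulrDr. Qed.

Lemma aff_const c v : aff (0, c) v = c.
Proof. by rewrite /aff /affine /= trmx0 mulmx0 mxE add0r. Qed.

Lemma aff_coord (s : R) (j : 'I_n) (x : V) v :
  aff (s *: delta_mx 0 j, - (s * x 0 j)) v = s * (v - x) 0 j.
Proof.
rewrite /aff /affine /= linearZ /= -scalemxAr trmx_delta -colE !mxE; lra.
Qed.

Definition Rep (h : V -> R) := exists L : seq P,
  (forall v, exists2 p, p \in L & h v = aff p v) /\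
  (forall v p, p \in L -> aff p v <= h v).

Lemma Rep_const c : Rep (fun _ => c).
Proof.
exists [:: (0, c)]; split => [v|v p]; first by exists (0, c); rewrite ?inE ?aff_const.
by rewrite inE => /eqP ->; rewrite aff_const.
Qed.

Lemma Rep_max h1 h2 : Rep h1 -> Rep h2 -> Rep (fun v => Num.max (h1 v) (h2 v)).
Proof.
move=> [L1 [A1 B1]] [L2 [A2 B2]]; exists (L1 ++ L2); split => [v|v p].
  have [le12|lt21] := leP (h1 v) (h2 v).
    have [p pL ->] := A2 v; by exists p; rewrite ?mem_cat ?pL ?orbT.
  have [p pL ->] := A1 v; by exists p; rewrite ?mem_cat ?pL.
rewrite mem_cat => /orP[pL|pL]; rewrite le_max.
  by rewrite B1.
by rewrite B2 ?orbT.
Qed.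

Lemma Rep_add h1 h2 : Rep h1 -> Rep h2 -> Rep (fun v => h1 v + h2 v).
Proof.
move=> [L1 [A1 B1]] [L2 [A2 B2]].
exists [seq (p.1 + q.1, p.2 + q.2) | p <- L1, q <- L2]; split => [v|v r].
  have [p pL ->] := A1 v; have [q qL ->] := A2 v.
  exists (p.1 + q.1, p.2 + q.2); last by rewrite aff_add.
  exact: (allpairs_f (fun p q : P => (p.1 + q.1, p.2 + q.2)) pL qL).
move=> /allpairsP [[p q] /= [pL qL ->]]; rewrite aff_add.
by apply: lerD; [apply: B1 | apply: B2].
Qed.

Lemma Rep_scale a h : 0 <= a -> Rep h -> Rep (fun v => a * h v).
Proof.
move=> a0 [L [A B]]; exists [seq (a *: p.1, a * p.2) | p <- L]; split => [v|v r].
  have [p pL ->] := A v; exists (a *: p.1, a * p.2); last by rewrite aff_scale.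
  by apply/mapP; exists p.
move=> /mapP [p pL ->]; rewrite aff_scale; apply: ler_wpM2l => //; exact: B.
Qed.

Lemma Rep_norm (x : V) : Rep (fun v => `|v - x|).
Proof.
exists ((0, 0) :: [seq (p.2 *: delta_mx 0 p.1, - (p.2 * x 0 p.1)) |
   p <- [seq (j, s) | j <- enum 'I_n, s <- [:: 1; -1]]]); split => [v|v r].
  have [e0|ne0] := eqVneq `|v - x| 0.
    by exists (0, 0); [rewrite inE eqxx | rewrite aff_const e0].
  have [[i j] /= Hij] := mx_norm_neq0 ne0.
  rewrite (ord1 i) in Hij.
  have mj : forall s : R, s \in [:: 1; -1] -> (j, s) \in [seq (j, s) | j <- enum 'I_n, s <- [:: 1; -1]].
    by move=> s sI; apply: (allpairs_f (fun j s => (j, s))); rewrite ?mem_enum.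
  have [a0|a0] := leP 0 ((v - x) 0 j).
    exists (1 *: delta_mx 0 j, - (1 * x 0 j)).
      rewrite inE; apply/orP; right; apply/mapP; exists (j, 1) => //; apply: mj; by rewrite inE eqxx.
    by rewrite aff_coord mul1r -[LHS]/(mx_norm (v - x)) Hij ger0_norm.
  exists ((-1) *: delta_mx 0 j, - ((-1) * x 0 j)).
    rewrite inE; apply/orP; right; apply/mapP; exists (j, -1) => //; apply: mj; by rewrite !inE eqxx orbT.
  by rewrite aff_coord mulN1r -[LHS]/(mx_norm (v - x)) Hij ltr0_norm.
rewrite inE => /orP[/eqP ->|]; first by rewrite aff_const.
move=> /mapP [[j s] /allpairsP [[j' s'] /= [_ sI [-> ->]]] ->].
rewrite aff_coord.
have H1 : `|(v - x) 0 j'| <= `|v - x|.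
  rewrite -[leRHS]/(mx_norm (v - x)) mx_normrE.
  exact: (le_bigmax _ (fun ij : 'I_1 * 'I_n => `|(v - x) ij.1 ij.2|) (0, j')).
move: sI; rewrite !inE => /orP[/eqP ->|/eqP ->].
  by rewrite mul1r (le_trans (ler_norm _)).
by rewrite mulN1r (le_trans _ H1) // -normrN ler_norm.
Qed.


Lemma Rep_unit h : Rep h -> exists m, forall k, (m <= k)%N ->
  exists (W : 'I_k.+1 -> V) (b : 'I_k.+1 -> R), forall v, h v = maxout_unit W b v.
Proof.
move=> [L [A B]].
have [p0 p0L _] := A 0.
exists (size L) => k Hk.
have nthL : forall j, nth p0 L j \in L.
  move=> j; have [jl|jl] := ltnP j (size L); first exact: mem_nth.
  by rewrite nth_default.
exists (fun j => (nth p0 L j).1), (fun j => (nth p0 L j).2) => v.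
rewrite /maxout_unit; apply/eqP; rewrite eq_le; apply/andP; split.
  have [p pL ->] := A v.
  have ip : (index p L < k.+1)%N by rewrite (leq_trans _ (leqW Hk)) // index_mem.
  apply: le_trans (le_bigmax _ (fun j : 'I_k.+1 => affine (nth p0 L j).1 (nth p0 L j).2 v) (Ordinal ip)).
  by rewrite /= nth_index.
apply: bigmax_le; first exact: (B v _ (nthL 0%N)).
by move=> j _; exact: (B v _ (nthL j)).
Qed.

Definition DC (g : V -> R) := exists h1 h2, Rep h1 /\ Rep h2 /\ forall v, g v = h1 v - h2 v.

Lemma DC_max g1 g2 : DC g1 -> DC g2 -> DC (fun v => Num.max (g1 v) (g2 v)).
Proof.
move=> [h1 [h2 [R1 [R2 E]]]] [k1 [k2 [S1 [S2 F]]]].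
exists (fun v => Num.max (h1 v + k2 v) (k1 v + h2 v)), (fun v => h2 v + k2 v).
split; first by apply: Rep_max; apply: Rep_add.
split; first exact: Rep_add.
move=> v; rewrite E F.
have [le|lt] := leP (h1 v - h2 v) (k1 v - k2 v).
  by rewrite max_r; [lra | lra].
by rewrite max_l; [lra | lra].
Qed.

Lemma DC_unit g : DC g -> exists k (W : 'I_2 -> 'I_k.+1 -> V) (b : 'I_2 -> 'I_k.+1 -> R)
         (u1 u2 c : R), forall v, g v = maxout2 W b u1 u2 c v.
Proof.
move=> [h1 [h2 [R1 [R2 E]]]].
have [m1 H1] := Rep_unit R1; have [m2 H2] := Rep_unit R2.
have [W1 [b1 E1]] := H1 (maxn m1 m2) (leq_maxl _ _).
have [W2 [b2 E2]] := H2 (maxn m1 m2) (leq_maxr _ _).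
exists (maxn m1 m2), (fun i => if i == 0 then W1 else W2),
  (fun i => if i == 0 then b1 else b2), 1, (-1), 0 => v.
by rewrite /maxout2 /= E E1 E2; lra.
Qed.

Definition foldmax (phi : P -> V -> R) (q0 : P) (l : seq P) v :=
  foldr (fun q acc => Num.max (phi q v) acc) (phi q0 v) l.

Lemma fold_props (phi : P -> V -> R) (q0 : P) (l : seq P) v :
  (forall q, q \in q0 :: l -> phi q v <= foldmax phi q0 l v) /\
  exists2 q, q \in q0 :: l & foldmax phi q0 l v = phi q v.
Proof.
rewrite /foldmax.
elim: l => [|a l [IH1 [q1 qin IH2]]] /=.
  split; last by exists q0; rewrite ?inE.
  by move=> q; rewrite inE => /eqP ->.
split.
  move=> q; rewrite !inE => /or3P[/eqP ->|/eqP ->|ql].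
  - by rewrite le_max IH1 ?inE ?eqxx ?orbT.
  - by rewrite le_max lexx.
  - by rewrite le_max IH1 ?inE ?ql ?orbT.
have [le|lt] := leP (phi a v) (foldr (fun q acc => Num.max (phi q v) acc) (phi q0 v) l).
  rewrite IH2; exists q1 => //; move: qin; rewrite !inE => /orP[->|->]; rewrite ?orbT //.
exists a => //; by rewrite !inE eqxx orbT.
Qed.

Lemma fold_DC (phi : P -> V -> R) (q0 : P) (l : seq P) :
  (forall q, DC (phi q)) ->
  DC (foldmax phi q0 l).
Proof.
rewrite /foldmax; move=> Hphi; elim: l => [|a l IH] /=; first exact: Hphi.
exact: DC_max.
Qed.

Lemma sum_ge (T : eqType) (F : T -> R) (s : seq T) x :
  (forall y, 0 <= F y) -> x \in s -> F x <= \sum_(y <- s) F y.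
Proof.
move=> F0; elim: s => [|a s IH] //; rewrite inE big_cons => /orP[/eqP ->|xs].
  by rewrite lerDl sumr_ge0.
by rewrite (le_trans (IH xs)) // lerDr.
Qed.

End Aux.
Arguments DC {R n}. Arguments Rep {R n}. Arguments aff {R n}. Arguments foldmax {R n}.
Unset Implicit Arguments.
Arguments Rep_const {R n} c. Arguments Rep_norm {R n} x. Arguments fold_props {R n} phi q0 l v.

Theorem theorem1 (R : realType) (n : nat) (hn : (1 <= n)%N)
  (C : set 'rV[R]_n) (f : 'rV[R]_n -> R) (eps : R) :
  compact C -> {within C, continuous f} -> 0 < eps ->
  exists (k : nat) (W : 'I_2 -> 'I_k.+1 -> 'rV[R]_n) (b : 'I_2 -> 'I_k.+1 -> R)
         (u1 u2 c : R),
    forall v, C v -> `|f v - maxout2 W b u1 u2 c v| < eps.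
Proof.
move=> cC fC eps0.
pose D := [set q : 'rV[R]_n * R | C q.1 /\ 0 < q.2 /\
  forall y, C y -> `|y - q.1| < 2 * q.2 -> `|f y - f q.1| < eps].
have cov : C `<=` cover D (fun q => ball q.1 q.2).
  move=> x Cx.
  have fx := (subspace_continuousP C f).1 fC x Cx.
  have := (cvgrPdist_lt _ _).1 fx eps eps0.
  have FF : Filter (within C (nbhs x)) by apply: within_filter.
  move=> /(_ FF); rewrite near_withinE => /nbhs_ballP [d /= d0 Hd].
  exists (x, d / 2); last by rewrite /= -ball_normE /ball_ /= subrr normr0 divr_gt0.
  split => //=; split; first by rewrite divr_gt0.
  move=> y Cy; rewrite mulrC divfK ?gt_eqF // => yd.
  rewrite distrC; apply: Hd => //.
  by rewrite -ball_normE /ball_ /= distrC.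
have [D' D'D cD'] := (eq_ind _ (fun P => P C) cC _ (compact_cover _)) _ D (fun q => ball q.1 q.2)
  (fun q _ => ball_open q.1 q.2) cov.
have memD : forall q, q \in enum_fset D' -> D q.
  by move=> q qD; move: (D'D q qD); rewrite in_setE.
have covl : forall v, C v -> exists2 q, q \in enum_fset D' & ball q.1 q.2 v.
  by move=> v Cv; have [q qD' bq] := cD' v Cv; exists q.
move: memD covl; move: (enum_fset D') => l memD covl.
case: l memD covl => [|q0 l'] memD covl.
  exists 0%N, (fun _ _ => 0), (fun _ _ => 0), 0, 0, 0 => v Cv.
  by have [q] := covl v Cv.
pose M := \sum_(q <- q0 :: l') `|f q.1| + eps.
have M0 : 0 <= M by rewrite /M addr_ge0 ?sumr_ge0 // ltW.
have fqM : forall q, q \in q0 :: l' -> `|f q.1| <= M - eps.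
  move=> q ql; rewrite /M addrK. exact: (@sum_ge R _ (fun q : 'rV[R]_n * R => `|f q.1|) _ _ (fun _ => normr_ge0 _) ql).
have fvM : forall v, C v -> `|f v| < M.
  move=> v Cv; have [q ql bq] := covl v Cv.
  have [Cq [q2 Hq]] := memD q ql.
  have : `|f v - f q.1| < eps.
    apply: Hq => //; move: bq; rewrite -ball_normE /ball_ /= distrC => bq.
    by apply: (lt_le_trans bq); lra.
  rewrite ltr_norml => /andP[h1 h2]; move: (fqM q ql); rewrite ler_norml => /andP[h3 h4].
  rewrite ltr_norml; apply/andP; split; lra.
pose phi (q : 'rV[R]_n * R) (v : 'rV[R]_n) :=
  f q.1 - (2 * M / `|q.2|) * Num.max 0 (`|v - q.1| - q.2).
have DCphi : forall q, DC (phi q).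
  move=> q; exists (fun _ => f q.1),
    (fun v => (2 * M / `|q.2|) * Num.max 0 (`|v - q.1| - q.2)).
  split; first exact: Rep_const.
  split; last by [].
  apply: Rep_scale; first by rewrite divr_ge0 // mulr_ge0.
  apply: (Rep_max (Rep_const 0)).
  exact: (Rep_add (Rep_norm q.1) (Rep_const (- q.2))).
have [k [W [b [u1 [u2 [c Ec]]]]]] := DC_unit (@fold_DC _ _ phi q0 l' DCphi).
exists k, W, b, u1, u2, c => v Cv; rewrite -Ec.
have [Fge [q ql Feq]] := fold_props phi q0 l' v.
rewrite ltr_distl; apply/andP; split.
  rewrite Feq.
  have [Cq [q2 Hq]] := memD q ql.
  move: (fvM v Cv); rewrite ltr_norml => /andP[fv1 fv2].
  move: (fqM q ql); rewrite ler_norml => /andP[fq1 fq2].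
  rewrite /phi gtr0_norm //.
  set m := Num.max 0 (`|v - q.1| - q.2).
  have m0 : 0 <= m by rewrite le_max lexx.
  have m1 : `|v - q.1| - q.2 <= m by rewrite le_max lexx orbT.
  have cc0 : 0 <= 2 * M / q.2 by rewrite divr_ge0 // ?mulr_ge0 // ltW.
  have c0 : 0 <= 2 * M / q.2 * m by rewrite mulr_ge0.
  have [dlt|dge] := ltP (`|v - q.1|) (2 * q.2).
    move: (Hq v Cv dlt); rewrite ltr_norml => /andP[a1 a2]; lra.
  have : 2 * M <= 2 * M / q.2 * m.
    apply: le_trans (_ : 2 * M / q.2 * q.2 <= _); first by rewrite divfK ?gt_eqF.
    apply: ler_wpM2l => //; lra.
  lra.
have [q' ql' bq'] := covl v Cv.
have [Cq' [q2' Hq']] := memD q' ql'.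
move: bq'; rewrite -ball_normE /ball_ /= distrC => bq'.
have := Fge q' ql'; rewrite /phi.
have -> : Num.max 0 (`|v - q'.1| - q'.2) = 0 by apply/max_idPl; lra.
rewrite mulr0 subr0 => h.
have dlt : `|v - q'.1| < 2 * q'.2 by lra.
move: (Hq' v Cv dlt); rewrite ltr_norml => /andP[a1 a2]; lra.
Qed.
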